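(* Let $P$ be an $n\times n$ sign pattern and $A\in\mathcal{Q}(P)$. If $A$ is nilpotent and has the nSSP, then every superpattern of $P$ (including $P$ itself) is a spectrally arbitrary pattern.
   Context: A sign pattern is an array with entries in $\{+,-,0\}$; its qualitative class $\mathcal{Q}(P)$ is the set of real matrices of the same size whose entries have the signs prescribed by $P$. $P'$ is a superpattern of $P$ if $P'$ is obtained from $P$ by replacing some (possibly none) of its $0$ entries by $+$ or $-$. An $n\times n$ sign pattern $P$ is spectrally arbitrary if for every monic real polynomial $p$ of degree $n$ there is $A\in\mathcal{Q}(P)$ with characteristic polynomial $p$. $\circ$ is the entrywise product. A real $n\times n$ matrix $A$ has the nSSP if $X=O$ is the only real $n\times n$ matrix with $A\circ X=O$ and $AX^\top-X^\top A=O$. *)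

(* Defs.v *)
From HB Require Import structures.
From mathcomp Require Import all_boot all_order all_algebra.
From mathcomp Require Import reals.
Set Implicit Arguments. Unset Strict Implicit. Unset Printing Implicit Defensive.
Import Order.TTheory GRing.Theory Num.Theory.
Local Open Scope ring_scope.

Inductive sign := SPos | SNeg | SZero.

Definition sign_eqb (a b : sign) : bool :=
  match a, b with
  | SPos, SPos | SNeg, SNeg | SZero, SZero => true
  | _, _ => false end.
Lemma sign_eqP : Equality.axiom sign_eqb.
Proof. by case; case; constructor. Qed.
HB.instance Definition _ := hasDecEq.Build sign sign_eqP.

Definition sign_pattern (n : nat) := 'M[sign]_n.

Definition has_sign (R : realDomainType) (s : sign) (x : R) : bool :=
  match s with
  | SPos => 0 < x
  | SNeg => x < 0
  | SZero => x == 0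
  end.

Definition in_qual_class (R : realDomainType) (n : nat)
    (P : sign_pattern n) (A : 'M[R]_n) : Prop :=
  forall i j, has_sign (P i j) (A i j).

Definition superpattern (n : nat) (P P' : sign_pattern n) : Prop :=
  forall i j, P i j <> SZero -> P' i j = P i j.

Definition spectrally_arbitrary (R : realDomainType) (n : nat)
    (P : sign_pattern n) : Prop :=
  forall p : {poly R}, p \is monic -> size p = n.+1 ->
    exists A : 'M[R]_n, in_qual_class P A /\ char_poly A = p.

Definition hadamard (R : pzRingType) (n : nat) (A B : 'M[R]_n) : 'M[R]_n :=
  \matrix_(i, j) (A i j * B i j).

Definition nSSP (R : pzRingType) (n : nat) (A : 'M[R]_n) : Prop :=
  forall X : 'M[R]_n,
    hadamard A X = 0 -> A *m X^T - X^T *m A = 0 -> X = 0.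

Definition nilpotent_mx (R : pzRingType) (n : nat) (A : 'M[R]_n) : Prop :=
  exists k : nat, A ^+ k = 0.

(* Main.v *)
Require Import Defs.
From HB Require Import structures.
From mathcomp Require Import all_boot all_order all_algebra.
From mathcomp Require Import reals.
From mathcomp Require Import all_classical all_reals all_analysis.
From mathcomp Require Import ring lra.
Set Implicit Arguments. Unset Strict Implicit. Unset Printing Implicit Defensive.
Import Order.TTheory GRing.Theory Num.Theory.
Import numFieldNormedType.Exports.
Local Open Scope ring_scope.

HB.instance Definition _ (R : realType) m n := Uniform_isComplete.Build 'M[R]_(m, n) (@mx_complete R m n).

Section Norms.
Variable R : realType.

Lemma nrm_entry m n (M : 'M[R]_(m, n)) i j : `|M i j| <= `|M|.
Proof.
have -> : `|M| = mx_norm M by []. rewrite mx_normrE.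
by apply: le_trans (le_bigmax _ _ (i, j)).
Qed.

Lemma nrm_le m n (M : 'M[R]_(m, n)) c : 0 <= c -> (forall i j, `|M i j| <= c) -> `|M| <= c.
Proof.
move=> c0 H; have -> : `|M| = mx_norm M by []. rewrite mx_normrE.
by apply/bigmax_leP; split => // -[i j] _; apply: H.
Qed.

Lemma nrm_mul m n p (A : 'M[R]_(m, n)) (B : 'M[R]_(n, p)) :
  `|A *m B| <= n%:R * (`|A| * `|B|).
Proof.
apply: nrm_le; first by rewrite mulr_ge0 // mulr_ge0.
move=> i j; rewrite mxE; apply: le_trans (ler_norm_sum _ _ _) _.
apply: le_trans (_ : \sum_(k < n) `|A| * `|B| <= _); last first.
  by rewrite sumr_const card_ord mulr_natl.
apply: ler_sum => k _; rewrite normrM; apply: ler_pM => //; exact: nrm_entry.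
Qed.

Lemma nrm_mul_le m n p (A : 'M[R]_(m, n)) (B : 'M[R]_(n, p)) a b :
  `|A| <= a -> `|B| <= b -> `|A *m B| <= n%:R * (a * b).
Proof.
move=> ha hb; apply: le_trans (nrm_mul A B) _.
apply: ler_wpM2l => //; apply: ler_pM => //.
Qed.

Lemma nrm_lsub m n1 n2 (M : 'M[R]_(m, n1 + n2)) : `|lsubmx M| <= `|M|.
Proof. by apply: nrm_le => // i j; rewrite mxE; apply: nrm_entry. Qed.
Lemma nrm_rsub m n1 n2 (M : 'M[R]_(m, n1 + n2)) : `|rsubmx M| <= `|M|.
Proof. by apply: nrm_le => // i j; rewrite mxE; apply: nrm_entry. Qed.

End Norms.

Section BanachWrap.
Variables (R : realType) (m n : nat) (U : set 'M[R]_(m, n)) (f : 'M[R]_(m,n) -> 'M[R]_(m,n)).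
Hypothesis fU : forall x, U x -> U (f x).
HB.instance Definition _ := isFun.Build _ _ U U f fU.
Lemma banach_wrap (q : R) x0 : closed U -> U x0 -> 0 <= q -> q < 1 ->
  (forall x y, U x -> U y -> `|f x - f y| <= q * `|x - y|) ->
  exists2 p, U p & p = f p.
Proof.
move=> cU Ux0 q0 q1 lip.
apply: (@banach_fixed_point R _ U [the {fun U >-> U} of f]) => //; last by exists x0.
exists (NngNum q0); split => // -[x y] /= [Ux Uy]; exact: lip.
Qed.
End BanachWrap.

Section Core.
Variables (R : realType) (n : nat) (A : 'M[R]_n).

Definition mask (E : 'M[R]_n) : 'M[R]_n :=
  \matrix_(i, j) (if A i j == 0 then 0 else E i j).
Definition Lmap (z : 'M[R]_(n, n + n)) : 'M[R]_n :=
  mask (lsubmx z) + A *m rsubmx z - rsubmx z *m A.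

Lemma maskB x y : mask x - mask y = mask (x - y).
Proof. by apply/matrixP => i j; rewrite !mxE; case: (A i j == 0); rewrite ?subr0. Qed.
Lemma mask_id x : mask (mask x) = mask x.
Proof. by apply/matrixP => i j; rewrite !mxE; case: (A i j == 0). Qed.
Lemma nrm_mask x : `|mask x| <= `|x|.
Proof.
apply: nrm_le => // i j; rewrite mxE; case: (A i j == 0); rewrite ?normr0 //.
exact: nrm_entry.
Qed.

Lemma Lmap_linear : linear Lmap.
Proof.
move=> a u v; rewrite /Lmap !linearD !linearZ /= mulmxDl -scalemxAl.
move: (A *m rsubmx u) (A *m rsubmx v) (rsubmx u *m A) (rsubmx v *m A) => p1 p2 p3 p4.
apply/matrixP => i j; rewrite !mxE; case: (A i j == 0); ring.
Qed.

HB.instance Definition _ := GRing.isLinear.Build R 'M[R]_(n, n + n) 'M[R]_n _ Lmap Lmap_linear.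

Lemma core (n0 : (0 < n)%N) (surj : forall Y, exists z, Lmap z = Y) (sig : R) : 0 < sig ->
  exists2 rho, 0 < rho & forall C M1, `|C - A| <= rho -> `|M1| <= rho ->
   exists E K, [/\ mask E = E, `|E| < sig, (1%:M + K) \in unitmx &
       (A + M1 + E) *m (1%:M + K) = (1%:M + K) *m C].
Proof.
move=> sig0.
have gex i j : exists z, Lmap z == delta_mx i j.
  by have [z hz] := surj (delta_mx i j); exists z; apply/eqP.
pose g i j := xchoose (gex i j).
have gP i j : Lmap (g i j) = delta_mx i j by apply/eqP/(xchooseP (gex i j)).
pose c := 1 + \sum_i \sum_j `|g i j|.
pose G (Y : 'M[R]_n) := \sum_i \sum_j Y i j *: g i j.
have LG Y : Lmap (G Y) = Y.
  rewrite /G linear_sum [RHS]matrix_sum_delta; apply: eq_bigr => i _.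
  rewrite linear_sum; apply: eq_bigr => j _; by rewrite linearZ /= gP.
have GB Y1 Y2 : G Y1 - G Y2 = G (Y1 - Y2).
  rewrite /G -sumrB; apply: eq_bigr => i _; rewrite -sumrB; apply: eq_bigr => j _.
  by rewrite !mxE scalerBl.
have c1 : 1 <= c.
  by rewrite /c lerDl; apply: sumr_ge0 => i _; apply: sumr_ge0.
have c0 : 0 < c by apply: lt_le_trans c1.
have Gn Y : `|G Y| <= c * `|Y|.
  apply: le_trans (ler_norm_sum _ _ _) _.
  apply: le_trans (_ : \sum_i \sum_j `|Y| * `|g i j| <= _).
    apply: ler_sum => i _; apply: le_trans (ler_norm_sum _ _ _) _.
    apply: ler_sum => j _; rewrite normrZ; apply: ler_wpM2r => //; exact: nrm_entry.
  rewrite (eq_bigr (fun i => `|Y| * \sum_j `|g i j|)); last by move=> i _; rewrite mulr_sumr.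
  rewrite -mulr_sumr mulrC; apply: ler_wpM2r => //; by rewrite /c lerDr.
have nR : 0 < n%:R :> R by rewrite ltr0n.
have invK (K : 'M[R]_n) : `|K| * n%:R < 1 -> (1%:M + K) \in unitmx.
  move=> hK; rewrite unitmxE unitfE; apply/negP => /det0P [v v0 hv].
  have hv' : v = - (v *m K) by apply/eqP; rewrite -addr_eq0 -{1}[v]mulmx1 -mulmxDr hv.
  have nv : 0 < `|v| by rewrite normr_gt0.
  have := nrm_mul v K; rewrite -normrN -hv' => h.
  have : `|v| < `|v| by apply: le_lt_trans h _; rewrite mulrA mulrC mulrA; rewrite -[X in _ < X]mul1r ltr_pM2r //; rewrite mulrC.
  by rewrite ltxx.
pose r := Num.min (sig / 2) ((8 * c * n%:R)^-1).
have r0 : 0 < r by rewrite lt_min divr_gt0 //= invr_gt0 mulr_gt0 // mulr_gt0.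
have rs : r <= sig / 2 by rewrite ge_min lexx.
have rn : 8 * c * n%:R * r <= 1.
  have h : r <= (8 * c * n%:R)^-1 by rewrite ge_min lexx orbT.
  have p : 0 < 8 * c * n%:R by rewrite mulr_gt0 // mulr_gt0.
  by rewrite mulrC -ler_pdivlMr // div1r.
pose rho := r / (4 * c).
have rho0 : 0 < rho by rewrite divr_gt0 // mulr_gt0.
have hrho : 4 * c * rho = r by rewrite /rho mulrC -mulrA mulVf ?mulr1 // mulf_neq0 // lt0r_neq0.
exists rho => // C M1 hC hM.
pose D := C - A.
pose Phi (z : 'M[R]_(n, n + n)) := G (D - M1 - M1 *m rsubmx z
         - mask (lsubmx z) *m rsubmx z + rsubmx z *m D).
pose U := closed_ball (0 : 'M[R]_(n, n + n)) r.
have UE z : U z <-> `|z| <= r.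
  by rewrite /U closed_ballE //= /closed_ball_ /= distrC subr0.
have fU z : U z -> U (Phi z).
  move/UE => hz; apply/UE.
  have hK : `|rsubmx z| <= r := le_trans (nrm_rsub z) hz.
  have hE : `|mask (lsubmx z)| <= r := le_trans (nrm_mask _) (le_trans (nrm_lsub z) hz).
  have p1 := nrm_mul_le hM hK.
  have p2 := nrm_mul_le hE hK.
  have p3 := nrm_mul_le hK hC.
  apply: le_trans (Gn _) _.
  have hW : `|D - M1 - M1 *m rsubmx z - mask (lsubmx z) *m rsubmx z + rsubmx z *m D|
      <= rho + rho + n%:R * (rho * r) + n%:R * (r * r) + n%:R * (r * rho).
    apply: le_trans (ler_normD _ _) _; apply: lerD => //.
    apply: le_trans (ler_normB _ _) _; apply: lerD => //.
    apply: le_trans (ler_normB _ _) _; apply: lerD => //.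
    apply: le_trans (ler_normB _ _) _; apply: lerD => //.
  apply: le_trans (ler_wpM2l (ltW c0) hW) _.
  have hrn : 0 <= n%:R :> R by apply: ltW.
  nra.
have lip z1 z2 : U z1 -> U z2 -> `|Phi z1 - Phi z2| <= 2^-1 * `|z1 - z2|.
  move=> /UE h1 /UE h2; rewrite GB.
  set K1 := rsubmx z1; set K2 := rsubmx z2.
  set E1 := mask (lsubmx z1); set E2 := mask (lsubmx z2).
  have hK1 : `|K1| <= r := le_trans (nrm_rsub z1) h1.
  have hE2 : `|E2| <= r := le_trans (nrm_mask _) (le_trans (nrm_lsub z2) h2).
  set d := `|z1 - z2|.
  have hdK : `|K1 - K2| <= d by rewrite /K1 /K2 -linearB; apply: nrm_rsub.
  have hdE : `|E1 - E2| <= d.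
    by rewrite /E1 /E2 maskB -linearB; apply: le_trans (nrm_mask _) (nrm_lsub _).
  have -> : D - M1 - M1 *m K1 - E1 *m K1 + K1 *m D - (D - M1 - M1 *m K2 - E2 *m K2 + K2 *m D)
     = - (M1 *m (K1 - K2)) - ((E1 - E2) *m K1 + E2 *m (K1 - K2)) + (K1 - K2) *m D.
    rewrite !mulmxBr !mulmxBl.
    move: (M1 *m K1) (M1 *m K2) (E1 *m K1) (E2 *m K2) (E2 *m K1) (K1 *m D) (K2 *m D) => a1 a2 a3 a4 a5 a6 a7.
    by apply/matrixP => i j; rewrite !mxE; lra.
  have p1 := nrm_mul_le hM hdK.
  have p2 := nrm_mul_le hdE hK1.
  have p3 := nrm_mul_le hE2 hdK.
  have p4 := nrm_mul_le hdK hC.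
  have hW : `|- (M1 *m (K1 - K2)) - ((E1 - E2) *m K1 + E2 *m (K1 - K2)) + (K1 - K2) *m D|
      <= n%:R * (rho * d) + (n%:R * (d * r) + n%:R * (r * d)) + n%:R * (d * rho).
    apply: le_trans (ler_normD _ _) _; apply: lerD => //.
    apply: le_trans (ler_normB _ _) _; apply: lerD; first by rewrite normrN.
    by apply: le_trans (ler_normD _ _) _; apply: lerD.
  apply: le_trans (Gn _) _; apply: le_trans (ler_wpM2l (ltW c0) hW) _.
  have hrn : 0 <= n%:R :> R by apply: ltW.
  have d0 : 0 <= d by apply: normr_ge0.
  have key : c * (n%:R * (2 * rho + 2 * r)) <= 2^-1 by nra.
  have -> : c * (n%:R * (rho * d) + (n%:R * (d * r) + n%:R * (r * d)) + n%:R * (d * rho))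
     = (c * (n%:R * (2 * rho + 2 * r))) * d by ring.
  by apply: ler_wpM2r.
have U0 : U 0 by apply/UE; rewrite normr0; apply: ltW.
have [p Up hp] : exists2 p, U p & p = Phi p.
  apply: (@banach_wrap R n (n + n) U Phi fU (2^-1) 0) => //.
  - exact: closed_ball_closed.
  - by rewrite invf_lt1 ?ltr1n.
move/UE: Up => Up.
exists (mask (lsubmx p)), (rsubmx p); split.
- exact: mask_id.
- apply: le_lt_trans (le_trans (nrm_mask _) (le_trans (nrm_lsub _) Up)) _.
  by apply: le_lt_trans rs _; rewrite ltr_pdivrMr // ltr_pMr // ltr1n.
- apply: invK; apply: le_lt_trans (_ : r * n%:R < 1).
    by apply: ler_wpM2r; [apply: ltW | apply: le_trans (nrm_rsub _) Up].
  nra.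
have hL : Lmap p = Lmap (Phi p) by rewrite -hp.
rewrite LG {1}/Lmap in hL.
move: hL; rewrite /D !mulmxDl !mulmxDr !mulmx1 !mul1mx mulmxN.
move: (mask (lsubmx p)) (rsubmx p) => E K.
move: (A *m K) (K *m A) (M1 *m K) (E *m K) (K *m C) => a1 a2 a3 a4 a5 h.
apply/matrixP => i j; move/matrixP: h => /(_ i j); rewrite !mxE; lra.
Qed.

End Core.

Section Flag.
Variables (F : fieldType) (n : nat) (A : 'M[F]_n) (N : nat).
Hypothesis AN : A ^+ N = 0.

Lemma chain_step r (t : 'M[F]_(r, n)) (u : 'rV[F]_n) :
  forall d k, (k + d = N)%N -> ~~ (u *m A ^+ k <= t)%MS ->
  exists s : 'rV[F]_n, ~~ (s <= t)%MS /\ (s *m A <= t)%MS.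
Proof.
elim=> [|d IH] k hk hu.
  by move: hu; rewrite addn0 in hk; rewrite hk AN mulmx0 sub0mx.
have [h|h] := boolP (u *m A ^+ k.+1 <= t)%MS.
  by exists (u *m A ^+ k); split => //; rewrite -mulmxA mulmxE -exprSr.
by apply: (IH k.+1) => //; rewrite addSnnS.
Qed.

Lemma flag r : (r <= n)%N -> exists t : 'M[F]_(r, n), exists U : 'M[F]_r,
  [/\ row_free t, t *m A = U *m t & forall i j : 'I_r, (j <= i)%N -> U i j = 0].
Proof.
elim: r => [|r IH] hr.
  exists 0, 0; split => //; first by rewrite /row_free mxrank0.
    by rewrite mul0mx mulmx0.
  by move=> [].
have [t [U [tf tA Ut]]] := IH (ltnW hr).
have rt : \rank t = r by apply/eqP.
have : [exists k : 'I_n, ~~ ((delta_mx 0 k : 'rV[F]_n) <= t)%MS].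
  apply: contraT => /existsPn h.
  have : (1%:M <= t)%MS.
    by apply/row_subP => i; rewrite row1; move: (h i); rewrite negbK.
  move/mxrankS; rewrite mxrank1 rt => hn.
  by move: hr; rewrite ltnNge hn.
case/existsP => k hk.
have [s [hs sA]] : exists s : 'rV[F]_n, ~~ (s <= t)%MS /\ (s *m A <= t)%MS.
  by apply: (@chain_step _ t (delta_mx 0 k) N 0 (add0n _)); rewrite expr0 mulmx1.
have [w hw] := submxP sA.
have s0 : s != 0 by apply: contraNneq hs => ->; rewrite sub0mx.
exists (col_mx s t), (block_mx (0 : 'M[F]_(1, 1)) w 0 U); split.
- rewrite /row_free; have -> : \rank (col_mx s t) = \rank (s + t)%MS by rewrite addsmxE.
  have h1 := mxrank_sum_cap s t.
  have hc : \rank (s :&: t)%MS = 0%N.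
    have := mxrank_leqif_sup (capmxSl s t); rewrite rank_rV s0 /=.
    case=> hle heq; apply/eqP; rewrite -leqn0 -ltnS.
    rewrite ltn_neqAle hle andbT heq; apply: contra hs => h.
    by apply: submx_trans h (capmxSr _ _).
  by rewrite hc addn0 rank_rV s0 rt in h1; rewrite h1.
- rewrite (mul_col_mx s t A) (mul_block_col (0 : 'M[F]_(1, 1)) w 0 U s t).
  by rewrite !mul0mx !add0r hw tA.
- move=> i j; case: (@splitP 1 r i) => [i' ei | i' ei]; case: (@splitP 1 r j) => [j' ej | j' ej].
  + rewrite (_ : i = lshift r i'); last exact: val_inj.
    rewrite (_ : j = lshift r j'); last exact: val_inj.
    by rewrite (block_mxEul (0 : 'M[F]_(1, 1)) w 0 U) mxE.
  + by move: ei ej; rewrite ord1 => /= -> ->.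
  + rewrite (_ : i = rshift 1 i'); last exact: val_inj.
    rewrite (_ : j = lshift r j'); last exact: val_inj.
    by rewrite (block_mxEdl (0 : 'M[F]_(1, 1)) w 0 U) mxE.
  + rewrite (_ : i = rshift 1 i'); last exact: val_inj.
    rewrite (_ : j = rshift 1 j'); last exact: val_inj.
    by rewrite (block_mxEdr (0 : 'M[F]_(1, 1)) w 0 U) /= ltnS => /Ut.
Qed.

Lemma triang : exists T : 'M[F]_n, exists U : 'M[F]_n,
  [/\ T \in unitmx, T *m A = U *m T & forall i j : 'I_n, (j <= i)%N -> U i j = 0].
Proof.
have [t [U [tf tA Ut]]] := flag (leqnn n).
by exists t, U; split => //; rewrite -row_free_unit.
Qed.

End Flag.

Section Surj.
Variables (R : realType) (n : nat) (A : 'M[R]_n).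

Lemma frobE (X Y : 'M[R]_n) : (mxvec X *m (mxvec Y)^T) 0 0 = \tr (X *m Y^T).
Proof.
rewrite mxE (reindex _ (curry_mxvec_bij _ _)) /= /mxtrace /=.
under [RHS]eq_bigr do rewrite mxE.
rewrite pair_bigA; apply: eq_bigr => -[i j] _ /=.
by rewrite !mxE !mxvecE.
Qed.

Lemma tr_delta i j (B : 'M[R]_n) : \tr (delta_mx i j *m B) = B j i.
Proof.
rewrite /mxtrace (bigD1 i) //= big1 ?addr0.
  rewrite mxE (bigD1 j) //= big1 ?addr0; first by rewrite mxE !eqxx mul1r.
  by move=> k kj; rewrite mxE (negbTE kj) andbF mul0r.
move=> k ki; rewrite mxE big1 // => l _; by rewrite mxE (negbTE ki) mul0r.
Qed.

Lemma surj_nSSP : nSSP A -> forall Y, exists z, Lmap A z = Y.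
Proof.
move=> hS.
pose M := lin_mx (Lmap A).
suff full : row_full M.
  move=> Y; exists (vec_mx (mxvec Y *m pinvmx M)).
  apply: (can_inj (@mxvecK _ n n)).
  rewrite -mul_vec_lin vec_mxK mulmxKpV //; exact: submx_full.
apply: contraT => nfull.
have rk : (\rank M < n * n)%N.
  by rewrite ltn_neqAle rank_leq_col andbT.
pose Ker := kermx M^T.
have Kn0 : Ker != 0.
  by rewrite -mxrank_eq0 mxrank_ker mxrank_tr -lt0n subn_gt0.
have [i hi] : exists i, row i Ker != 0.
  apply/existsP; apply: contraR Kn0 => /existsPn h; apply/eqP/row_matrixP => i.
  by move: (h i); rewrite negbK row0 => /eqP.
pose v := row i Ker.
have vM : v *m M^T = 0 by rewrite /v -row_mul mulmx_ker row0.
have [Y hY] : exists Y, v = mxvec Y by exists (vec_mx v); rewrite vec_mxK.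
have orth z : \tr (Lmap A z *m Y^T) = 0.
  rewrite -frobE -hY -mul_vec_lin -mulmxA.
  by rewrite -[_ *m v^T]trmxK trmx_mul trmxK -/M vM trmx0 mulmx0 mxE.
have Y0 : Y = 0.
  apply: hS.
  - apply/matrixP => k l; rewrite !mxE.
    have [->|Akl] := eqVneq (A k l) 0; first by rewrite mul0r.
    have := orth (row_mx (delta_mx k l) 0).
    rewrite /Lmap row_mxKl row_mxKr mulmx0 mul0mx subr0 addr0.
    have -> : mask A (delta_mx k l) = delta_mx k l.
      apply/matrixP => a b; rewrite !mxE.
      case: eqP => // Aab; case: eqP => [ak|] /=; last by [].
      by case: eqP => // bl; move: Aab; rewrite ak bl => /eqP; rewrite (negbTE Akl).
    by rewrite tr_delta mxE => ->; rewrite mulr0.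
  - apply/matrixP => k l.
    have := orth (row_mx 0 (delta_mx l k)).
    rewrite /Lmap row_mxKl row_mxKr.
    have -> : mask A 0 = 0 by apply/matrixP => a b; rewrite !mxE; case: eqP.
    rewrite add0r mulmxBl linearB /=.
    have -> : \tr (A *m delta_mx l k *m Y^T) = \tr (delta_mx l k *m (Y^T *m A)).
      by rewrite -mulmxA mxtrace_mulC mulmxA.
    rewrite -mulmxA !tr_delta => /eqP; rewrite subr_eq0 => /eqP h.
    have -> : (A *m Y^T - Y^T *m A) k l = (A *m Y^T) k l - (Y^T *m A) k l by rewrite !mxE.
    by rewrite h subrr mxE.
have : v = 0 by rewrite hY Y0 linear0.
by move/eqP; rewrite (negbTE hi).
Qed.

End Surj.

Section Near.
Variables (R : realType) (n : nat).

Definition cmpv (c : 'I_n.+1 -> R) : 'M[R]_n.+1 :=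
  \matrix_(i, j) (if (i == n :> nat) then - c j else (i.+1 == j :> nat)%:R).

Section Pow.
Variable H : 'M[R]_n.+1.
Hypothesis Hsup : forall i j : 'I_n.+1, (j <= i)%N -> H i j = 0.

Lemma supow k (i j : 'I_n.+1) : (j < i + k)%N -> (H ^+ k) i j = 0.
Proof.
elim: k i j => [|k IH] i j hij.
  have : i != j by apply: contraTneq hij => ->; rewrite addn0 ltnn.
  by rewrite expr0 mxE => /negbTE ->.
rewrite exprSr mxE big1 // => l _.
have [hl|hl] := ltnP l (i + k); first by rewrite IH // mul0r.
by rewrite Hsup ?mulr0 //; rewrite -ltnS (leq_trans hij) // addnS ltnS.
Qed.

Hypothesis Hsd : forall i j : 'I_n.+1, j = i.+1 :> nat -> H i j != 0.

Lemma sudiag (k : 'I_n.+1) : (H ^+ k) ord0 k != 0.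
Proof.
case: k => k hk; elim: k hk => [|k IH] hk.
  by rewrite expr0 mxE /= oner_eq0.
have hk' : (k < n.+1)%N by apply: ltnW.
rewrite exprSr mxE (bigD1 (Ordinal hk')) //= big1 ?addr0.
  by rewrite mulf_neq0 // ?IH // Hsd.
move=> l hl; have [lk|lk] := ltnP l k.
  by rewrite supow ?mul0r.
have lk' : (k < l)%N.
  by rewrite ltn_neqAle lk andbT eq_sym; apply: contra hl => /eqP e; apply/eqP/val_inj.
by rewrite Hsup ?mulr0.
Qed.

Definition Kr : 'M[R]_n.+1 := \matrix_(k, j) (H ^+ k) ord0 j.

Lemma Kr_unit : Kr \in unitmx.
Proof.
rewrite unitmxE unitfE -det_tr det_trig.
  by rewrite prodf_seq_neq0; apply/allP => i _ /=; rewrite !mxE sudiag.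
by apply/is_trig_mxP => i j hij; rewrite !mxE supow.
Qed.

Lemma KrH : Kr *m H = cmpv (fun _ => 0) *m Kr.
Proof.
apply/matrixP => k j; rewrite !mxE.
have -> : \sum_l Kr k l * H l j = (H ^+ k.+1) ord0 j.
  by rewrite exprSr mxE; apply: eq_bigr => l _; rewrite mxE.
have [kn|kn] := eqVneq (k : nat) n.
  rewrite big1; last by move=> l _; rewrite mxE kn eqxx oppr0 mul0r.
  by rewrite kn supow.
have hk1 : (k.+1 < n.+1)%N by rewrite ltn_neqAle kn ltn_ord.
rewrite (bigD1 (Ordinal hk1)) //= big1 ?addr0.
  by rewrite !mxE (negbTE kn) eqxx mul1r.
move=> l hl; rewrite mxE (negbTE kn).
case: eqP => [e|]; last by rewrite mul0r.
by case/eqP: hl; apply/val_inj.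
Qed.

End Pow.

Lemma nrm_mul3 (P X Q : 'M[R]_n.+1) : `|P *m X *m Q| <= n.+1%:R ^+ 2 * (`|P| * `|X| * `|Q|).
Proof.
apply: le_trans (nrm_mul _ _) _.
apply: le_trans (ler_wpM2l _ (ler_wpM2r _ (nrm_mul P X))) _ => //.
by rewrite expr2 -!mulrA lexx.
Qed.

Lemma small_le (a x rho : R) : 0 <= a -> 0 < rho -> 0 <= x -> x <= rho / (2 * (1 + a)) ->
  a * x <= rho / 2.
Proof.
move=> a0 r0 x0; rewrite ler_pdivlMr ?mulr_gt0 ?ltr_wpDr // => h.
rewrite ler_pdivlMr //; nra.
Qed.

Variable A : 'M[R]_n.+1.
Hypothesis Anil : exists N, A ^+ N = 0.

Lemma near (rho : R) : 0 < rho -> exists W : 'M[R]_n.+1, exists W' : 'M[R]_n.+1,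
  exists2 eta, 0 < eta & [/\ W' *m W = 1%:M, W *m W' = 1%:M &
   forall c : 'I_n.+1 -> R, (forall j, `|c j| <= eta) -> `|W' *m cmpv c *m W - A| <= rho].
Proof.
move=> rho0.
have [N AN] := Anil.
have [T [U [Tu TA Ut]]] := triang AN.
pose Ti := invmx T.
pose a1 := n.+1%:R ^+ 2 * (`|Ti| * `|T|).
have a10 : 0 <= a1 by rewrite mulr_ge0 // mulr_ge0.
pose eps := rho / (2 * (1 + a1)).
have eps0 : 0 < eps by rewrite divr_gt0 // mulr_gt0 // ltr_wpDr.
pose Ds : 'M[R]_n.+1 := \matrix_(i < n.+1, j < n.+1) (if (j == i.+1 :> nat) then (if 0 <= U i j then 1 else -1) else 0).
pose H := U + eps *: Ds.
have Hsup (i j : 'I_n.+1) : (j <= i)%N -> H i j = 0.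
  move=> hji; rewrite !mxE Ut // (_ : (j == i.+1 :> nat) = false) ?mulr0 ?addr0 //.
  by apply/negbTE; rewrite neq_ltn ltnS hji.
have Hsd (i j : 'I_n.+1) : j = i.+1 :> nat -> H i j != 0.
  move=> e; rewrite !mxE e eqxx; case: ifP => h.
    by rewrite mulr1 gt_eqF // ltr_wpDl.
  rewrite mulrN1 lt_eqF // subr_lt0; apply: lt_trans eps0; rewrite ltNge h //.
pose K := Kr H.
have Ku : K \in unitmx := Kr_unit Hsup Hsd.
have KH := KrH Hsup.
pose W := K *m T.
pose W' := Ti *m invmx K.
have WW' : W' *m W = 1%:M.
  by rewrite /W /W' mulmxA -(mulmxA Ti) mulVmx // mulmx1 mulVmx.
have W'W : W *m W' = 1%:M.
  by rewrite /W /W' mulmxA -(mulmxA K) mulmxV // mulmx1 mulmxV.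
pose a2 := n.+1%:R ^+ 2 * (`|W'| * `|W|).
have a20 : 0 <= a2 by rewrite mulr_ge0 // mulr_ge0.
pose eta := rho / (2 * (1 + a2)).
have eta0 : 0 < eta by rewrite divr_gt0 // mulr_gt0 // ltr_wpDr.
exists W, W', eta => //; split => // c hc.
have e1 : W' *m cmpv (fun _ => 0) *m W = Ti *m H *m T.
  rewrite /W /W' -!mulmxA; congr (_ *m _).
  by rewrite (mulmxA _ K T) -KH !mulmxA mulVmx // mul1mx.
have e2 : A = Ti *m U *m T.
  by rewrite -mulmxA -TA mulmxA mulVmx // mul1mx.
have -> : W' *m cmpv c *m W - A =
    W' *m (cmpv c - cmpv (fun _ => 0)) *m W + Ti *m (eps *: Ds) *m T.
  rewrite mulmxBr mulmxBl e1 e2.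
  by rewrite /H mulmxDr mulmxDl opprD addrA subrK.
apply: le_trans (ler_normD _ _) _.
rewrite [rho]splitr; apply: lerD.
  apply: le_trans (nrm_mul3 _ _ _) _.
  have hC : `|cmpv c - cmpv (fun _ => 0)| <= eta.
    apply: nrm_le => [|i j]; first exact: ltW.
    rewrite !mxE; case: ifP => _; last by rewrite subrr normr0 ltW.
    by rewrite oppr0 subr0 normrN.
  have := small_le a20 rho0 (normr_ge0 _) hC.
  move=> h; apply: le_trans h; rewrite le_eqVlt; apply/orP; left; apply/eqP.
  rewrite /a2; ring.
apply: le_trans (nrm_mul3 _ _ _) _.
have hD : `|eps *: Ds| <= eps.
  rewrite normrZ gtr0_norm // -[X in _ <= X]mulr1 ler_wpM2l //; first exact: ltW.
  apply: nrm_le => // i j; rewrite mxE; case: ifP => _; last by rewrite normr0.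
  by case: ifP => _; rewrite ?normrN normr1.
have := small_le a10 rho0 (normr_ge0 _) (le_trans hD (lexx _)).
move=> h; apply: le_trans h; rewrite le_eqVlt; apply/orP; left; apply/eqP.
rewrite /a1; ring.
Qed.

End Near.

Section Aux.
Variable R : realType.

Lemma char_poly_conj n (V V' M : 'M[R]_n) : V' *m V = 1%:M ->
  char_poly (V *m M *m V') = char_poly M.
Proof.
move=> h; have h' : V *m V' = 1%:M := mulmx1C h.
rewrite /char_poly /char_poly_mx.
have -> : 'X%:M - map_mx polyC (V *m M *m V') =
    map_mx polyC V *m ('X%:M - map_mx polyC M) *m map_mx polyC V'.
  rewrite !map_mxM mulmxBr mulmxBl; congr (_ - _).
  rewrite mul_mx_scalar -scalemxAl -map_mxM h' map_mx1.
  by rewrite scale_scalar_mx mulr1.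
rewrite !det_mulmx mulrC mulrA -det_mulmx -map_mxM h map_mx1 det1 mul1r.
by [].
Qed.

Lemma char_poly_cmpv (q : {poly R}) d : q \is monic -> size q = d.+2 ->
  char_poly (cmpv (fun j : 'I_d.+1 => q`_j)) = q.
Proof.
move=> qm hs.
have hd : (size q).-1 = d.+1 by rewrite hs.
change (char_poly (\matrix_(i < d.+1, j < d.+1)
   (if (i == d.+1.-1 :> nat) then - q`_j else (i.+1 == j :> nat)%:R)) = q).
rewrite -hd.
exact: companionmxK qm.
Qed.

Lemma exists_sig N (A : 'M[R]_N) :
  exists2 sig, 0 < sig & forall i j, A i j != 0 -> sig <= `|A i j|.
Proof.
pose F (ij : 'I_N * 'I_N) := if A ij.1 ij.2 == 0 then 1 else `|A ij.1 ij.2|.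
exists (\big[Num.min/1]_ij F ij).
  apply/bigmin_gtP; split => // -[i j] _; rewrite /F /=.
  by case: eqP => // /eqP h; rewrite normr_gt0.
move=> i j h; apply: le_trans (bigmin_le 1 (i, j) F) _.
by rewrite /F /= (negbTE h).
Qed.

End Aux.

Theorem corollary5p6 (R : realType) (n : nat) (P : sign_pattern n)
    (A : 'M[R]_n) :
  in_qual_class P A -> nilpotent_mx A -> nSSP A ->
  forall P' : sign_pattern n, superpattern P P' -> spectrally_arbitrary R P'.
Proof.
move=> hQ hN hS P' hsup p pm ps.
case: n P A hQ hN hS P' hsup p pm ps => [|m] P A hQ hN hS P' hsup p pm ps.
  exists 0; split; first by move=> [].
  rewrite /char_poly det_mx00.
  have hp : p = (p`_0)%:P by apply: size1_polyC; rewrite ps.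
  move/monicP: pm; rewrite lead_coefE ps /= => h0.
  by rewrite hp h0.
have surj := surj_nSSP hS.
have [sig sig0 hsig] := exists_sig A.
have [rho rho0 hcore] := core (ltn0Sn m) surj sig0.
have [W [W' [eta eta0 [WW' W'W hnear]]]] := near hN rho0.
pose S := 1 + \sum_(j < m.+1) `|p`_j|.
have S0 : 0 < S by rewrite /S; apply: lt_le_trans ltr01 _; rewrite lerDl; apply: sumr_ge0.
pose s := Num.min 1 (eta / S).
have s0 : 0 < s by rewrite lt_min ltr01 divr_gt0.
have s1 : s <= 1 by rewrite ge_min lexx.
have sS : s * S <= eta.
  have : s <= eta / S by rewrite ge_min lexx orbT.
  by rewrite ler_pdivlMr.
pose c := fun j : 'I_m.+1 => s ^+ (m.+1 - j) * p`_j.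
have hc j : `|c j| <= eta.
  rewrite /c normrM; apply: le_trans sS.
  have hpj : `|p`_j| <= S.
    rewrite /S (bigD1 j) //= addrA; apply: le_trans (_ : 1 + `|p`_j| <= _).
      by rewrite lerDr.
    by rewrite lerDl; apply: sumr_ge0.
  apply: ler_pM => //.
  rewrite normrX ger0_norm; last exact: ltW.
  have -> : (m.+1 - j = (m - j).+1)%N by rewrite subSn // -ltnS.
  rewrite exprSr; apply: ler_piMl; [exact: ltW | apply: exprn_ile1 => //; exact: ltW].
pose C := W' *m cmpv c *m W.
have hC : `|C - A| <= rho := hnear c hc.
pose M1 : 'M[R]_m.+1 := \matrix_(i, j) (if A i j == 0 then
   (match P' i j with SPos => rho | SNeg => - rho | SZero => 0 end) else 0).
have hM1 : `|M1| <= rho.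
  apply: nrm_le => [|i j]; first exact: ltW.
  rewrite mxE; case: ifP => _; last by rewrite normr0 ltW.
  by case: (P' i j); rewrite ?normrN ?normr0 ?gtr0_norm // ltW.
have [E [K [mE nE Ku eqK]]] := hcore C M1 hC hM1.
exists (s^-1 *: (A + M1 + E)); split.
  move=> i j.
  have hPA := hQ i j.
  have hEij : E i j = if A i j == 0 then 0 else E i j by rewrite -{1}mE mxE.
  have sinv : 0 < s^-1 by rewrite invr_gt0.
  rewrite !mxE.
  have [hA|hA] := eqVneq (A i j) 0.
    rewrite hEij hA eqxx !addr0 add0r.
    by case: (P' i j) => /=; rewrite ?mulr0 ?eqxx // ?mulrN ?oppr_lt0 mulr_gt0.
  rewrite (negbTE hA) in hEij *; rewrite addr0.
  have hP : P i j <> SZero by move=> e; rewrite e /= in hPA; rewrite (eqP hPA) eqxx in hA.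
  rewrite (hsup i j hP).
  have hE : `|E i j| < `|A i j|.
    by apply: le_lt_trans (nrm_entry E i j) _; apply: lt_le_trans nE (hsig i j hA).
  move: hE; rewrite ltr_norml => /andP [hE1 hE2].
  move: hPA; case: (P i j) => /= hPA; last by rewrite hPA in hA.
    rewrite gtr0_norm // in hE1 hE2; apply: mulr_gt0 => //; lra.
  rewrite ltr0_norm // in hE1 hE2; rewrite pmulr_rlt0 //; lra.
pose Da : 'M[R]_m.+1 := diag_mx (\row_i s ^+ i).
pose Db : 'M[R]_m.+1 := diag_mx (\row_i s ^- i).
have sn0 : s != 0 by rewrite gt_eqF.
have hDD : Db *m Da = 1%:M.
  apply/matrixP => i j; rewrite mul_diag_mx !mxE.
  case: eqP => [->|]; last by rewrite mulr0n mulr0.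
  by rewrite mulr1n mulVf // expf_neq0.
have hsc : s^-1 *: cmpv c = Da *m cmpv (fun j => p`_j) *m Db.
  apply/matrixP => i j; rewrite mul_mx_diag mul_diag_mx !mxE.
  case: ifP => hi.
    rewrite /c; have hj : (j <= m)%N by rewrite -ltnS.
    have e1 : s ^+ (m.+1 - j) = s ^+ (m - j) * s by rewrite subSn // exprSr.
    have e2 : s ^+ i = s ^+ (m - j) * s ^+ j by rewrite (eqP hi) -exprD subnK.
    by rewrite e1 e2; field; rewrite ?sn0 ?expf_neq0.
  case: eqP => h; last by rewrite mulr0 mulr0 mul0r.
  by rewrite -h exprSr; field; rewrite sn0 expf_neq0.
have eqX : A + M1 + E = (1%:M + K) *m C *m invmx (1%:M + K).
  by rewrite -eqK mulmxK.
pose V := (1%:M + K) *m W' *m Da.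
pose V' := Db *m W *m invmx (1%:M + K).
have VV : V' *m V = 1%:M.
  rewrite /V /V' !mulmxA -(mulmxA _ (invmx _)) mulVmx // mulmx1.
  by rewrite -(mulmxA _ W) W'W mulmx1 hDD.
have -> : s^-1 *: (A + M1 + E) = V *m cmpv (fun j => p`_j) *m V'.
  rewrite eqX scalemxAl scalemxAr /C scalemxAl scalemxAr hsc.
  by rewrite /V /V' !mulmxA.
by rewrite char_poly_conj // char_poly_cmpv.
Qed.
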